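(* Let $\mathsf{Pk}$ be the finite set of packets and let $p$ be any ProbNetKAT program. Then for all $a,b \subseteq \mathsf{Pk}$, the limits defining the matrix semantics exist and \[ \mathcal{B}[\![p]\!]_{ab} = [\![p]\!](a)(\{b\}). \]
   Context: Fix finitely many fields $f_1,\dots,f_k$, each ranging over a finite set of natural numbers. A packet $\pi$ is a record assigning a value to each field; $\pi.f$ is the value of field $f$ and $\pi[f:=n]$ is $\pi$ with field $f$ updated to $n$. $\mathsf{Pk}$ is the finite set of all packets and $2^{\mathsf{Pk}}$ its powerset. Syntax. Predicates: $t ::= \mathsf{false} \mid \mathsf{true} \mid f=n \mid t \,\&\, u \mid t ; u \mid \neg t$ (disjunction, conjunction, negation). Programs: $p ::= t \mid f \leftarrow n \mid p \,\&\, q \mid p ; q \mid p \oplus_r q \mid p^*$ (filter, assignment, union/parallel composition, sequential composition, probabilistic choice with rational $r\in[0,1]$, iteration). Define $p^{(0)} := \mathsf{true}$ and $p^{(n+1)} := \mathsf{true} \,\&\, (p ; p^{(n)})$. Matrix semantics: $\mathcal{B}[\![p]\!] \in [0,1]^{2^{\mathsf{Pk}}\times 2^{\mathsf{Pk}}}$, with $[\varphi]\in\{0,1\}$ the Iverson bracket: $\mathcal{B}[\![\mathsf{false}]\!]_{ab}=[b=\emptyset]$; $\mathcal{B}[\![\mathsf{true}]\!]_{ab}=[a=b]$; $\mathcal{B}[\![f=n]\!]_{ab}=[b=\{\pi\in a : \pi.f=n\}]$; $\mathcal{B}[\![\neg t]\!]_{ab}=[b\subseteq a]\cdot \mathcal{B}[\![t]\!]_{a,a-b}$;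 $\mathcal{B}[\![f\leftarrow n]\!]_{ab}=[b=\{\pi[f:=n] : \pi\in a\}]$; $\mathcal{B}[\![p \,\&\, q]\!]_{ab}=\sum_{c,d}[c\cup d=b]\,\mathcal{B}[\![p]\!]_{ac}\,\mathcal{B}[\![q]\!]_{ad}$; $\mathcal{B}[\![p;q]\!]=\mathcal{B}[\![p]\!]\cdot\mathcal{B}[\![q]\!]$ (matrix product); $\mathcal{B}[\![p\oplus_r q]\!]=r\,\mathcal{B}[\![p]\!]+(1-r)\,\mathcal{B}[\![q]\!]$; $\mathcal{B}[\![p^*]\!]_{ab}=\lim_{n\to\infty}\mathcal{B}[\![p^{(n)}]\!]_{ab}$. Conjunction $t;u$ and disjunction $t\,\&\,u$ of predicates are interpreted as the corresponding program constructs. Denotational semantics: for a finite set $X$, $\mathcal{D}(X)$ is the set of probability distributions on $X$; $\delta_x$ is the Dirac distribution at $x$; for $g:X\to Y$, $\mathcal{D}(g)(\mu)=\mu\circ g^{-1}$ (pushforward); for $g:X\to\mathcal{D}(Y)$, $g^\dagger(\mu)(A)=\sum_{x\in X} g(x)(A)\,\mu(x)$; $\mu\times\nu$ is the product distribution. Order distributions on $2^{\mathsf{Pk}}$ by $\mu\sqsubseteq\nu$ iff $\mu(\{b : a\subseteq b\})\le\nu(\{b: a\subseteq b\})$ for all $a\subseteq\mathsf{Pk}$. Then $[\![p]\!]:2^{\mathsf{Pk}}\to\mathcal{D}(2^{\mathsf{Pk}})$ is: $[\![\mathsf{false}]\!](a)=\delta_\emptyset$; $[\![\mathsf{true}]\!](a)=\delta_a$;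 $[\![f=n]\!](a)=\delta_{\{\pi\in a:\pi.f=n\}}$; $[\![f\leftarrow n]\!](a)=\delta_{\{\pi[f:=n]:\pi\in a\}}$; $[\![\neg t]\!](a)=\mathcal{D}(\lambda b.\,a-b)([\![t]\!](a))$; $[\![p\,\&\,q]\!](a)=\mathcal{D}(\cup)([\![p]\!](a)\times[\![q]\!](a))$; $[\![p;q]\!](a)=[\![q]\!]^\dagger([\![p]\!](a))$; $[\![p\oplus_r q]\!](a)=r[\![p]\!](a)+(1-r)[\![q]\!](a)$; $[\![p^*]\!](a)=\bigsqcup_{n\in\mathbb{N}}[\![p^{(n)}]\!](a)$, the supremum of the $\sqsubseteq$-increasing chain. *)

(* Defs.v *)
From HB Require Import structures.
From mathcomp Require Import all_boot all_order all_algebra.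
From mathcomp Require Import all_classical all_reals all_analysis.
Set Implicit Arguments. Unset Strict Implicit. Unset Printing Implicit Defensive.
Import Order.TTheory GRing.Theory Num.Theory numFieldNormedType.Exports.
Local Open Scope ring_scope.

Section ProbNetKAT.
(* k fields; field i ranges over the finite set {0,...,sz i - 1} of naturals *)
Variables (k : nat) (sz : 'I_k -> nat).

Definition packet := {dffun forall i : 'I_k, 'I_(sz i)}.

Definition pk_get (pi : packet) (f : 'I_k) : 'I_(sz f) := pi f.
Definition pk_set (pi : packet) (f : 'I_k) (n : 'I_(sz f)) : packet :=
  @finfun _ (fun i : 'I_k => 'I_(sz i))
    (@dfwith _ (fun i : 'I_k => 'I_(sz i)) (fun j => pi j) f n).

Definition pkset := {set packet}.

Inductive pred :=
| PFalse : pred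
| PTrue : pred
| PTest (f : 'I_k) (n : 'I_(sz f)) : pred
| POr : pred -> pred -> pred
| PAnd : pred -> pred -> pred
| PNeg : pred -> pred.

Inductive prog :=
| Filter : pred -> prog
| Assign (f : 'I_k) (n : 'I_(sz f)) : prog
| Union : prog -> prog -> prog
| Seq : prog -> prog -> prog
| Choice (r : rat) : (0 <= r <= 1)%R -> prog -> prog -> prog
| Star : prog -> prog.

Definition set_test (f : 'I_k) (n : 'I_(sz f)) (a : pkset) : pkset :=
  [set pi in a | pk_get pi f == n].
Definition set_assign (f : 'I_k) (n : 'I_(sz f)) (a : pkset) : pkset :=
  [set pk_set pi n | pi in a].

Variable R : realType.

Definition mat := pkset -> pkset -> R.

Definition mat_id : mat := fun a b => (a == b)%:R.
Definition mat_union (M N : mat) : mat := fun a b =>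
  \sum_(c : pkset) \sum_(d : pkset) ((c :|: d) == b)%:R * M a c * N a d.
Definition mat_mul (M N : mat) : mat := fun a b =>
  \sum_(c : pkset) M a c * N c b.
Definition mat_choice (r : rat) (M N : mat) : mat := fun a b =>
  ratr r * M a b + (1 - ratr r) * N a b.

(* B[[p^(n)]] where p^(0) = true and p^(n+1) = true & (p ; p^(n)) *)
Fixpoint mat_iter (M : mat) (n : nat) : mat :=
  match n with
  | 0 => mat_id
  | n'.+1 => mat_union mat_id (mat_mul M (mat_iter M n'))
  end.

Fixpoint Bpred (t : pred) : mat :=
  match t with
  | PFalse => fun a b => (b == finset.set0)%:R
  | PTrue => mat_id
  | PTest f n => fun a b => (b == set_test n a)%:R
  | POr t u => mat_union (Bpred t) (Bpred u)
  | PAnd t u => mat_mul (Bpred t) (Bpred u)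
  | PNeg t => fun a b => (b \subset a)%:R * Bpred t a (a :\: b)
  end.

Fixpoint B (p : prog) : mat :=
  match p with
  | Filter t => Bpred t
  | Assign f n => fun a b => (b == set_assign n a)%:R
  | Union p q => mat_union (B p) (B q)
  | Seq p q => mat_mul (B p) (B q)
  | Choice r _ p q => mat_choice r (B p) (B q)
  | Star p => fun a b => limn (fun n => mat_iter (B p) n a b)
  end.

(* "the limits defining the matrix semantics exist": for every starred
   subprogram q* of p and all a b, the sequence B[[q^(n)]]_ab converges. *)
Fixpoint limits_exist (p : prog) : Prop :=
  match p with
  | Filter _ | Assign _ _ => True
  | Union p q | Seq p q | Choice _ _ p q => limits_exist p /\ limits_exist q
  | Star p => limits_exist p /\
      forall a b, cvgn (fun n => mat_iter (B p) n a b)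
  end.

(** * Denotational semantics [[p]] : 2^Pk -> D(2^Pk)
    A distribution on the finite set 2^Pk is represented by its probability
    mass function; mu(A) = \sum_(x in A) mu x. *)
Definition dist := {ffun pkset -> R}.

Definition is_dist (mu : dist) : Prop :=
  (forall x, 0 <= mu x) /\ \sum_x mu x = 1.

Definition measure_of (mu : dist) (A : {set pkset}) : R := \sum_(x in A) mu x.

Definition dirac (x : pkset) : dist := [ffun y => (y == x)%:R].

Definition push (g : pkset -> pkset) (mu : dist) : dist :=
  [ffun y => \sum_(x | g x == y) mu x].
Definition dunion (mu nu : dist) : dist :=
  [ffun c => \sum_(x : pkset) \sum_(y : pkset) ((x :|: y) == c)%:R * (mu x * nu y)].
Definition dbind (g : pkset -> dist) (mu : dist) : dist :=
  [ffun y => \sum_(x : pkset) g x y * mu x].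
Definition dchoice (r : rat) (mu nu : dist) : dist :=
  [ffun y => ratr r * mu y + (1 - ratr r) * nu y].

Definition dle (mu nu : dist) : Prop :=
  forall a : pkset, measure_of mu (finset (fun b : pkset => a \subset b))
                   <= measure_of nu (finset (fun b : pkset => a \subset b)).

Definition is_sup (c : nat -> dist) (mu : dist) : Prop :=
  is_dist mu /\ (forall n, dle (c n) mu) /\
  (forall nu, is_dist nu -> (forall n, dle (c n) nu) -> dle mu nu).

Definition dsup (c : nat -> dist) : dist := xget (dirac finset.set0) (is_sup c).

Definition kleisli_id : pkset -> dist := dirac.

Fixpoint den_iter (g : pkset -> dist) (n : nat) : pkset -> dist :=
  match n with
  | 0 => dirac
  | n'.+1 => fun a => dunion (dirac a) (dbind (den_iter g n') (g a))
  end.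

Fixpoint Dpred (t : pred) : pkset -> dist :=
  match t with
  | PFalse => fun _ => dirac finset.set0
  | PTrue => dirac
  | PTest f n => fun a => dirac (set_test n a)
  | POr t u => fun a => dunion (Dpred t a) (Dpred u a)
  | PAnd t u => fun a => dbind (Dpred u) (Dpred t a)
  | PNeg t => fun a => push (fun b => a :\: b) (Dpred t a)
  end.

Fixpoint D (p : prog) : pkset -> dist :=
  match p with
  | Filter t => Dpred t
  | Assign f n => fun a => dirac (set_assign n a)
  | Union p q => fun a => dunion (D p a) (D q a)
  | Seq p q => fun a => dbind (D q) (D p a)
  | Choice r _ p q => fun a => dchoice r (D p a) (D q a)
  | Star p => fun a => dsup (fun n => den_iter (D p) n a)
  end.

End ProbNetKAT.

(* Main.v *)
Require Import Defs.
From HB Require Import structures.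
From mathcomp Require Import all_boot all_order all_algebra.
From mathcomp Require Import all_classical all_reals all_analysis.
From mathcomp Require Import ring lra.
Set Implicit Arguments. Unset Strict Implicit. Unset Printing Implicit Defensive.
Import Order.TTheory GRing.Theory Num.Theory numFieldNormedType.Exports.
Local Open Scope ring_scope.
Local Open Scope classical_set_scope.

Section Proof.
Variables (k : nat) (sz : 'I_k -> nat) (R : realType).
Local Notation pkset := (pkset sz).
Local Notation dist := (dist sz R).
Local Notation dirac := (@Defs.dirac k sz R).

Definition up (mu : dist) (c : pkset) : R :=
  measure_of mu (finset (fun b : pkset => c \subset b)).

Lemma upE mu c : up mu c = \sum_(b : pkset | c \subset b) mu b.
Proof. rewrite /up /measure_of; apply: eq_bigl => b /=; by rewrite inE. Qed.

Lemma sum_eq1 (T : finType) (e : T) (F : T -> R) :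
  \sum_(c : T) (c == e)%:R * F c = F e.
Proof.
rewrite (bigD1 e) //= eqxx mul1r big1 ?addr0 // => c /negbTE ->.
by rewrite mul0r.
Qed.

Lemma sum_pred_eq (T : finType) (P : {pred T}) (w : T) :
  \sum_(z | P z) (w == z)%:R = (P w)%:R :> R.
Proof.
rewrite big_mkcond /= -(sum_eq1 w (fun z => (P z)%:R)).
by apply: eq_bigr => z _; rewrite eq_sym; case: (P z); case: (z == w); rewrite ?mulr1 ?mulr0.
Qed.

Lemma diracE x y : dirac x y = (y == x)%:R.
Proof. by rewrite ffunE. Qed.

Lemma is_dist_dirac x : is_dist (dirac x).
Proof.
split=> [y|]; first by rewrite diracE ler0n.
rewrite -(sum_eq1 x (fun _ => 1)); apply: eq_bigr => y _.
by rewrite diracE mulr1.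
Qed.


Lemma dunionE (mu nu : dist) c :
  dunion mu nu c = \sum_x \sum_y ((x :|: y) == c)%:R * (mu x * nu y).
Proof. by rewrite ffunE. Qed.

Lemma dbindE (g : pkset -> dist) (mu : dist) y :
  dbind g mu y = \sum_x g x y * mu x.
Proof. by rewrite ffunE. Qed.

Lemma sum_eqK (T : finType) (e : T) (K : R) : \sum_(c : T) (e == c)%:R * K = K.
Proof.
transitivity (\sum_(c : T) (c == e)%:R * K); last exact: (sum_eq1 e (fun _ => K)).
by apply: eq_bigr => c _; rewrite eq_sym.
Qed.

Lemma dunion_dirac x y : dunion (dirac x) (dirac y) = dirac (x :|: y).
Proof.
apply/ffunP => c; rewrite dunionE diracE.
rewrite (eq_bigr (fun x' => (x' == x)%:R * ((x' :|: y) == c)%:R)); last first.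
  move=> x' _; rewrite -(sum_eq1 y (fun y' => (x' == x)%:R * ((x' :|: y') == c)%:R)).
  by apply: eq_bigr => y' _; rewrite !diracE; ring.
by rewrite sum_eq1 eq_sym.
Qed.

Lemma dbind_dirac (g : pkset -> dist) x : dbind g (dirac x) = g x.
Proof.
apply/ffunP => y; rewrite dbindE -(sum_eq1 x (fun x' => g x' y)).
by apply: eq_bigr => x' _; rewrite diracE mulrC.
Qed.

Lemma dbind_ret (mu : dist) : dbind dirac mu = mu.
Proof.
apply/ffunP => y; rewrite dbindE -(sum_eq1 y (fun x => mu x)).
by apply: eq_bigr => x _; rewrite diracE eq_sym.
Qed.

Lemma is_dist_dunion (mu nu : dist) : is_dist mu -> is_dist nu -> is_dist (dunion mu nu).
Proof.
move=> [mu0 mu1] [nu0 nu1]; split=> [c|].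
  rewrite dunionE; apply: sumr_ge0 => x _; apply: sumr_ge0 => y _.
  by rewrite mulr_ge0 ?ler0n // mulr_ge0.
under eq_bigr do rewrite dunionE.
rewrite exchange_big /=.
under eq_bigr do rewrite exchange_big /=.
under eq_bigr do under eq_bigr do rewrite sum_eqK.
by rewrite -big_distrlr /= mu1 nu1 mulr1.
Qed.

Lemma is_dist_dbind (g : pkset -> dist) (mu : dist) : (forall x, is_dist (g x)) -> is_dist mu ->
  is_dist (dbind g mu).
Proof.
move=> gd [mu0 mu1]; split=> [y|].
  rewrite dbindE; apply: sumr_ge0 => x _.
  by rewrite mulr_ge0 //; case: (gd x).
under eq_bigr do rewrite dbindE.
rewrite exchange_big /=.
under eq_bigr do rewrite -mulr_suml.
rewrite -mu1; apply: eq_bigr => x _; by case: (gd x) => _ ->; rewrite mul1r.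
Qed.

Lemma ratr01 (r : rat) : (0 <= r <= 1)%R -> 0 <= ratr r :> R /\ ratr r <= 1 :> R.
Proof.
move=> /andP[r0 r1]; split; first by rewrite ler0q.
by rewrite -(rmorph1 (ratr : rat -> R)) ler_rat.
Qed.

Lemma is_dist_dchoice r (H : (0 <= r <= 1)%R) (mu nu : dist) :
  is_dist mu -> is_dist nu -> is_dist (dchoice r mu nu).
Proof.
move: (ratr01 H) => [r0 r1] [mu0 mu1] [nu0 nu1]; split=> [y|].
  by rewrite ffunE addr_ge0 // mulr_ge0 // subr_ge0.
under eq_bigr do rewrite ffunE.
by rewrite big_split /= -!mulr_sumr mu1 nu1; ring.
Qed.


Lemma up_dirac x c : up (dirac x) c = (c \subset x)%:R.
Proof.
rewrite upE; under eq_bigr do rewrite diracE.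
rewrite -(sum_pred_eq [pred b : pkset | c \subset b] x) /=.
by apply: eq_bigr => b _; rewrite eq_sym.
Qed.

Lemma up_dbind (g : pkset -> dist) (mu : dist) c :
  up (dbind g mu) c = \sum_x up (g x) c * mu x.
Proof.
rewrite upE; under eq_bigr do rewrite dbindE.
rewrite exchange_big /=; apply: eq_bigr => x _; by rewrite upE mulr_suml.
Qed.

Lemma up_dunion_dirac a (nu : dist) c :
  up (dunion (dirac a) nu) c = up nu (c :\: a).
Proof.
rewrite upE.
transitivity (\sum_(z : pkset | c \subset z) \sum_y ((a :|: y) == z)%:R * nu y).
  apply: eq_bigr => z _; rewrite dunionE.
  rewrite (bigD1 a) //= [X in _ + X]big1 ?addr0.
    by apply: eq_bigr => y _; rewrite diracE eqxx mul1r.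
  move=> x /negbTE xa; apply: big1 => y _; by rewrite diracE xa mul0r mulr0.
rewrite exchange_big /= upE.
transitivity (\sum_(y : pkset) ((c :\: a) \subset y)%:R * nu y).
  apply: eq_bigr => y _.
  by rewrite -mulr_suml (sum_pred_eq [pred z : pkset | c \subset z]) /= subDset.
rewrite [RHS]big_mkcond /=; apply: eq_bigr => y _.
by case: ifP; rewrite ?mul1r ?mul0r.
Qed.

Lemma up_split (mu : dist) a : up mu a = mu a + \sum_(b : pkset | a \proper b) mu b.
Proof.
rewrite upE (bigD1 a) ?subxx //=; congr (_ + _).
apply: eq_bigl => b; by rewrite finset.properEneq eq_sym andbC.
Qed.

Lemma up_inj (mu nu : dist) : (forall c, up mu c = up nu c) -> mu = nu.
Proof.
move=> H; apply/ffunP => a.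
suff : forall n (a : pkset), (#|~: a| < n)%N -> mu a = nu a by apply; exact: ltnSn.
elim=> [//|n IH] a' Ha.
have Es : \sum_(b : pkset | a' \proper b) mu b = \sum_(b : pkset | a' \proper b) nu b.
  apply: eq_bigr => b hb; apply: IH.
  rewrite -properC in hb; rewrite ltnS in Ha; exact: leq_trans (proper_card hb) Ha.
by move: (H a'); rewrite !up_split Es => /addIr.
Qed.


Lemma cvg_sum_fin (I : finType) (P : {pred I}) (f : I -> nat -> R) (l : I -> R) :
  (forall i, P i -> f i n @[n --> \oo] --> l i) ->
  (\sum_(i | P i) f i n) @[n --> \oo] --> \sum_(i | P i) l i.
Proof.
move=> H; rewrite -fct_sumE.
apply: (big_ind2 (fun (u : nat -> R) (v : R) => u @ \oo --> v)).
- exact: cvg_cst.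
- by move=> u1 v1 u2 v2 h1 h2; apply: cvgD.
- exact: H.
Qed.

Lemma is_cvg_sum_fin (I : finType) (P : {pred I}) (f : I -> nat -> R) :
  (forall i, P i -> cvgn (f i)) -> cvgn (fun n => \sum_(i | P i) f i n).
Proof.
move=> H; apply/cvg_ex; exists (\sum_(i | P i) limn (f i)).
apply: cvg_sum_fin => i Pi; exact: H.
Qed.

Lemma cvg_up_pt (mu_ : nat -> dist) :
  (forall c, cvgn (fun n => up (mu_ n) c)) -> forall b, cvgn (fun n => mu_ n b).
Proof.
move=> H b.
suff : forall m (a : pkset), (#|~: a| < m)%N -> cvgn (fun n => mu_ n a) by apply; exact: ltnSn.
elim=> [//|m IH] a Ha.
have -> : (fun n => mu_ n a) =
   (fun n => up (mu_ n) a - \sum_(b : pkset | a \proper b) mu_ n b).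
  by apply: funext => n; rewrite up_split addrK.
apply: is_cvgB; first exact: H.
apply: is_cvg_sum_fin => b' hb; apply: IH.
rewrite -properC in hb; rewrite ltnS in Ha; exact: leq_trans (proper_card hb) Ha.
Qed.

Lemma up_ge0 (mu : dist) c : is_dist mu -> 0 <= up mu c.
Proof. by move=> [h _]; rewrite upE; apply: sumr_ge0 => b _. Qed.

Lemma up_le1 (mu : dist) c : is_dist mu -> up mu c <= 1.
Proof.
move=> [h0 h1]; rewrite upE -h1 [X in _ <= X](bigID (fun b : pkset => c \subset b)) /=.
by rewrite lerDl; apply: sumr_ge0 => b _.
Qed.

Lemma up_set0 (mu : dist) : up mu finset.set0 = \sum_b mu b.
Proof. by rewrite upE; apply: eq_bigl => b; rewrite finset.sub0set. Qed.

Section Star.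
Variable g : pkset -> dist.
Hypothesis gd : forall x, is_dist (g x).

Lemma is_dist_den n a : is_dist (den_iter g n a).
Proof.
elim: n a => [|n IH] a /=; first exact: is_dist_dirac.
apply: is_dist_dunion; first exact: is_dist_dirac.
by apply: is_dist_dbind.
Qed.

Lemma den_chain n a c : up (den_iter g n a) c <= up (den_iter g n.+1 a) c.
Proof.
elim: n a c => [|n IH] a c.
  rewrite /= up_dunion_dirac dbind_ret up_dirac.
  case ca: (c \subset a); last by apply: up_ge0.
  move: ca; rewrite -finset.setD_eq0 => /eqP ->.
  by rewrite up_set0; case: (gd a) => _ ->.
rewrite [den_iter g n.+1 a]/= [den_iter g n.+2 a]/= !up_dunion_dirac !up_dbind.
apply: ler_sum => x _; apply: ler_wpM2r; last exact: IH.
by case: (gd a) => h _; exact: h.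
Qed.

Variable a : pkset.

Lemma up_den_cvg c : cvgn (fun n => up (den_iter g n a) c).
Proof.
apply/cvg_ex; exists (sup (range (fun n => up (den_iter g n a) c))).
apply: nondecreasing_cvgn.
  by apply/nondecreasing_seqP => n; exact: den_chain.
exists 1 => _ [n _ <-]; exact: up_le1 (is_dist_den n a).
Qed.

Definition Lim : dist := [ffun b => limn (fun n => den_iter g n a b)].

Lemma den_pt_cvg b : cvgn (fun n => den_iter g n a b).
Proof. exact: (@cvg_up_pt (fun n => den_iter g n a) up_den_cvg). Qed.

Lemma up_Lim_cvg c : (fun n => up (den_iter g n a) c) @ \oo --> up Lim c.
Proof.
have -> : (fun n => up (den_iter g n a) c) =
    (fun n => \sum_(b : pkset | c \subset b) den_iter g n a b).
  by apply: funext => n; rewrite upE.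
have -> : up Lim c = \sum_(b : pkset | c \subset b) limn (fun n => den_iter g n a b).
  by rewrite upE; apply: eq_bigr => b _; rewrite ffunE.
apply: cvg_sum_fin => b _; exact: den_pt_cvg.
Qed.

Lemma Lim_sup : is_sup (fun n => den_iter g n a) Lim.
Proof.
split; [split|split].
- move=> b; rewrite ffunE; apply: limr_ge; first exact: den_pt_cvg.
  by apply: nearW => n; case: (is_dist_den n a) => h _; exact: h.
- rewrite -up_set0; have H := up_Lim_cvg (c:=finset.set0).
  have E : (fun n => up (den_iter g n a) finset.set0) = (fun _ => 1).
    by apply: funext => n; rewrite up_set0; case: (is_dist_den n a).
  rewrite E in H; by rewrite -(cvg_lim (@Rhausdorff R) H) lim_cst.
- move=> n c; change (up (den_iter g n a) c <= up Lim c).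
  rewrite -(cvg_lim (@Rhausdorff R) (up_Lim_cvg (c:=c))).
  apply: nondecreasing_cvgn_le; last exact: up_den_cvg.
  by apply/nondecreasing_seqP => m; exact: den_chain.
- move=> nu nud H c; change (up Lim c <= up nu c).
  rewrite -(cvg_lim (@Rhausdorff R) (up_Lim_cvg (c:=c))).
  apply: limr_le; first exact: up_den_cvg.
  by apply: nearW => n; exact: H n c.
Qed.

Lemma dsup_Lim : dsup (fun n => den_iter g n a) = Lim.
Proof.
apply: xget_unique; first exact: Lim_sup.
move=> y [yd [yub yl]]; have [Ld [Lub Ll]] := Lim_sup.
apply: up_inj => c; apply/eqP; rewrite eq_le; apply/andP; split.
- exact: (yl Lim Ld Lub c).
- exact: (Ll y yd yub c).
Qed.

End Star.

Fixpoint ev (t : Defs.pred sz) (a : pkset) : pkset :=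
  match t with
  | PFalse => finset.set0
  | PTrue => a
  | PTest f n => set_test n a
  | POr t u => ev t a :|: ev u a
  | PAnd t u => ev u (ev t a)
  | PNeg t => a :\: ev t a
  end.

Lemma ev_sub t a : ev t a \subset a.
Proof.
elim: t a => [|| f n | t IHt u IHu | t IHt u IHu | t IHt] a /=.
- exact: finset.sub0set.
- exact: subxx.
- by apply/fintype.subsetP => x; rewrite inE => /andP[].
- by rewrite finset.subUset IHt IHu.
- exact: fintype.subset_trans (IHu _) (IHt _).
- exact: subsetDl.
Qed.

Lemma Dpred_ev t a : Dpred R t a = dirac (ev t a).
Proof.
elim: t a => [|| f n | t IHt u IHu | t IHt u IHu | t IHt] a //=.
- by rewrite IHt IHu dunion_dirac.
- by rewrite IHt dbind_dirac IHu.
- rewrite IHt; apply/ffunP => y; rewrite ffunE diracE.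
  transitivity (\sum_(x : pkset | a :\: x == y) (ev t a == x)%:R : R).
    by apply: eq_bigr => x _; rewrite diracE eq_sym.
  by rewrite (sum_pred_eq [pred x : pkset | a :\: x == y]) /= eq_sym.
Qed.

Lemma setDDa (a x : pkset) : x \subset a -> a :\: (a :\: x) = x.
Proof. by move=> h; rewrite finset.setDDr finset.setDv finset.set0U; apply/finset.setIidPr. Qed.

Lemma Bpred_ev t a b : Bpred R t a b = (b == ev t a)%:R.
Proof.
elim: t a b => [|| f n | t IHt u IHu | t IHt u IHu | t IHt] a b //=.
- by rewrite /mat_id eq_sym.
- rewrite /mat_union.
  transitivity (\sum_(c : pkset) (c == ev t a)%:R *
     \sum_(d : pkset) (d == ev u a)%:R * ((c :|: d) == b)%:R : R).
    apply: eq_bigr => c _; rewrite mulr_sumr; apply: eq_bigr => d _.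
    by rewrite IHt IHu; ring.
  rewrite (sum_eq1 (ev t a) (fun c => \sum_(d : pkset) (d == ev u a)%:R * ((c :|: d) == b)%:R)).
  by rewrite (sum_eq1 (ev u a) (fun d => ((ev t a :|: d) == b)%:R)) eq_sym.
- rewrite /mat_mul.
  transitivity (\sum_(c : pkset) (c == ev t a)%:R * (b == ev u c)%:R : R).
    by apply: eq_bigr => c _; rewrite IHt IHu.
  by rewrite (sum_eq1 (ev t a) (fun c => (b == ev u c)%:R)).
- rewrite IHt; case hb: (b \subset a).
    rewrite mul1r; congr (_%:R).
    case: (eqVneq b (a :\: ev t a)) => [->|hne].
      by rewrite setDDa ?ev_sub // !eqxx.
    case: eqP => // h.
    by rewrite -h setDDa // eqxx in hne.
  rewrite mul0r; case: eqP => // hbe.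
  by rewrite hbe subsetDl in hb.
Qed.

Lemma main (p : prog sz) : limits_exist R p /\ (forall a, is_dist (D R p a)) /\
  (forall a b, B R p a b = D R p a b).
Proof.
elim: p => [t|f n|p [l1 [d1 e1]] q [l2 [d2 e2]]|p [l1 [d1 e1]] q [l2 [d2 e2]]
           |r Hr p [l1 [d1 e1]] q [l2 [d2 e2]]|p [l1 [d1 e1]]].
- split=> //; split=> a; first by rewrite /= Dpred_ev; exact: is_dist_dirac.
  by move=> b; rewrite /= Dpred_ev Bpred_ev diracE.
- split=> //; split=> a; first exact: is_dist_dirac.
  by move=> b; rewrite /= diracE.
- split=> //; split=> a; first exact: is_dist_dunion.
  move=> b; rewrite /= /mat_union dunionE; apply: eq_bigr => c _.
  by apply: eq_bigr => d _; rewrite e1 e2 mulrA.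
- split=> //; split=> a; first exact: is_dist_dbind.
  move=> b; rewrite /= /mat_mul dbindE; apply: eq_bigr => c _.
  by rewrite e1 e2 mulrC.
- split=> //; split=> a; first exact: is_dist_dchoice.
  by move=> b; rewrite /= /mat_choice ffunE e1 e2.
- have E : forall n a b, mat_iter (B R p) n a b = den_iter (D R p) n a b.
    elim=> [|n IH] a b /=; first by rewrite diracE /mat_id eq_sym.
    rewrite /mat_union dunionE; apply: eq_bigr => x _; apply: eq_bigr => y _.
    rewrite diracE /mat_id /mat_mul dbindE -mulrA [(a == x)]eq_sym.
    congr (_ * (_ * _)); apply: eq_bigr => e _; by rewrite e1 IH mulrC.
  have F : forall a b, (fun n => mat_iter (B R p) n a b) = (fun n => den_iter (D R p) n a b).
    by move=> a b; apply: funext => n; exact: E.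
  split; first by split=> // a b; rewrite F; exact: den_pt_cvg.
  split=> a; first by rewrite /= (dsup_Lim d1); case: (Lim_sup d1 a).
  by move=> b; rewrite /= (dsup_Lim d1) ffunE F.
Qed.

End Proof.

Theorem theorem3p1 (k : nat) (sz : 'I_k -> nat) (R : realType)
    (p : prog sz) :
  limits_exist R p /\
  forall a b : pkset sz, B R p a b = measure_of (D R p a) (finset.set1 b).
Proof.
have [l [_ e]] := main R p.
by split=> // a b; rewrite e /measure_of big_set1.
Qed.
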